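(* Let $L$ be an $S$-Noetherian lattice, where $S$ is a multiplicatively closed subset of $L$ with $1\in S$, $0\notin S$. Then every radical element $a$ of $L$ (i.e., $a=\sqrt a$) such that $t\not\le a$ for all $t\in S$ is the meet of finitely many $S$-prime elements.
   Context: A multiplicative lattice is a complete lattice with a commutative, associative multiplication distributing over arbitrary joins, with $1$ as identity; $L_*$ is the set of compact elements; $(a:b)=\bigvee\{x\mid xb\le a\}$. An element $m$ is principal if $a\wedge mb=m((a:m)\wedge b)$ and $a\vee(b:m)=(am\vee b):m$ for all $a,b$. An $r$-lattice is a modular, principally generated, compactly generated multiplicative lattice with $1$ compact. A multiplicatively closed subset is a nonempty $S\subseteq L_*$ closed under multiplication. An element $a$ is $S$-compact if $sa\le b\le a$ for some compact $b$ and $s\in S$; an $S$-Noetherian lattice is an $r$-lattice in which every element is $S$-compact. $\sqrt a=\bigvee\{x\in L_*\mid x^n\le a\text{ for some }n\in\mathbb{Z}^+\}$. A proper element $p$ with $t\not\le p$ for all $t\in S$ is $S$-prime if there exists $s\in S$ such that for all $a,b\in L$, $ab\le p$ implies $sa\le p$ or $sb\le p$. *)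

(* Defs.v *)
From Stdlib Require Import List Arith.

Record mlattice := MLattice {
  car :> Type;
  le : car -> car -> Prop;
  sup : (car -> Prop) -> car;
  mul : car -> car -> car;
  one : car;
  le_refl : forall x, le x x;
  le_trans : forall x y z, le x y -> le y z -> le x z;
  le_antisym : forall x y, le x y -> le y x -> x = y;
  sup_ub : forall (X : car -> Prop) x, X x -> le x (sup X);
  sup_least : forall (X : car -> Prop) u, (forall x, X x -> le x u) -> le (sup X) u;
  one_top : forall x, le x one;
  mul_comm : forall x y, mul x y = mul y x;
  mul_assoc : forall x y z, mul x (mul y z) = mul (mul x y) z;
  mul_one : forall x, mul one x = x;
  mul_sup : forall x (X : car -> Prop),
      mul x (sup X) = sup (fun y => exists z, X z /\ y = mul x z)
}.

Arguments le {m}.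
Arguments sup {m}.
Arguments mul {m}.
Arguments one {m}.

Section Defs.
Variable L : mlattice.

Definition bot : L := sup (fun _ => False).
Definition join (a b : L) : L := sup (fun x => x = a \/ x = b).
Definition inf (X : L -> Prop) : L := sup (fun x => forall y, X y -> le x y).
Definition meet (a b : L) : L := inf (fun x => x = a \/ x = b).
Definition inf_list (l : list L) : L := inf (fun x => In x l).

Fixpoint pow (x : L) (n : nat) : L :=
  match n with 0 => one | S k => mul x (pow x k) end.

Definition compact (c : L) : Prop :=
  forall X : L -> Prop, le c (sup X) ->
    exists l : list L, (forall y, In y l -> X y) /\ le c (sup (fun y => In y l)).

Definition colon (a b : L) : L := sup (fun x => le (mul x b) a).

Definition principal (m : L) : Prop :=
  (forall a b, meet a (mul m b) = mul m (meet (colon a m) b)) /\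
  (forall a b, join a (colon b m) = colon (join (mul a m) b) m).

Definition modular : Prop :=
  forall a b c, le a c -> join a (meet b c) = meet (join a b) c.

Definition principally_generated : Prop :=
  forall a, a = sup (fun x => principal x /\ le x a).

Definition compactly_generated : Prop :=
  forall a, a = sup (fun x => compact x /\ le x a).

Definition r_lattice : Prop :=
  modular /\ principally_generated /\ compactly_generated /\ compact one.

Definition mult_closed (S : L -> Prop) : Prop :=
  (exists s, S s) /\ (forall s, S s -> compact s) /\
  (forall s t, S s -> S t -> S (mul s t)).

Definition S_compact (S : L -> Prop) (a : L) : Prop :=
  exists s b, S s /\ compact b /\ le (mul s a) b /\ le b a.

Definition S_noetherian (S : L -> Prop) : Prop :=
  r_lattice /\ forall a, S_compact S a.

Definition rad (a : L) : L :=
  sup (fun x => compact x /\ exists n, 1 <= n /\ le (pow x n) a).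

Definition proper (p : L) : Prop := p <> one.

Definition S_prime (S : L -> Prop) (p : L) : Prop :=
  proper p /\ (forall t, S t -> ~ le t p) /\
  exists s, S s /\ forall a b, le (mul a b) p -> le (mul s a) p \/ le (mul s b) p.

End Defs.

(* Main.v *)
Require Import Defs.
From Stdlib Require Import List.
From Stdlib Require Import Classical.
From mathcomp Require boolp classical_sets.
Set Bullet Behavior "Strict Subproofs".

Lemma sup_pair_le (L : mlattice) (x y : L) : le x y -> sup (fun w => w = x \/ w = y) = y.
Proof.
  intro H. apply le_antisym.
  - apply sup_least. intros w [->| ->]; [exact H | apply le_refl].
  - apply sup_ub. right; reflexivity.
Qed.

Lemma mul_mono_r (L : mlattice) (x y z : L) : le x y -> le (mul z x) (mul z y).
Proof.
  intro H. pose proof (sup_pair_le L x y H) as E.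
  rewrite <- E. rewrite mul_sup. apply sup_ub. exists x. split; [left; reflexivity | reflexivity].
Qed.

Lemma mul_mono_l (L : mlattice) (x y z : L) : le x y -> le (mul x z) (mul y z).
Proof. intro H. rewrite (mul_comm L x), (mul_comm L y). apply mul_mono_r; exact H. Qed.

Lemma mul_mono (L : mlattice) (x x' y y' : L) : le x x' -> le y y' -> le (mul x y) (mul x' y').
Proof.
  intros H1 H2. apply le_trans with (mul x' y); [apply mul_mono_l | apply mul_mono_r]; assumption.
Qed.

Lemma mul_le_l (L : mlattice) (x y : L) : le (mul x y) y.
Proof. rewrite <- (mul_one L y) at 2. apply mul_mono_l. apply one_top. Qed.

Lemma mul_le_r (L : mlattice) (x y : L) : le (mul x y) x.
Proof. rewrite mul_comm. apply mul_le_l. Qed.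

Lemma colon_spec (L : mlattice) (a b z : L) : le z (colon L a b) <-> le (mul z b) a.
Proof.
  split; intro H.
  - apply le_trans with (mul (colon L a b) b). { apply mul_mono_l; exact H. }
    unfold colon. rewrite mul_comm, mul_sup. apply sup_least.
    intros y [w [Hw ->]]. rewrite mul_comm. exact Hw.
  - unfold colon. apply sup_ub. exact H.
Qed.

Lemma colon_l (L : mlattice) (a b z : L) : le z (colon L a b) -> le (mul z b) a.
Proof. apply colon_spec. Qed.
Lemma colon_r (L : mlattice) (a b z : L) : le (mul z b) a -> le z (colon L a b).
Proof. apply colon_spec. Qed.

Lemma meet_spec (L : mlattice) (a b z : L) : le z (meet L a b) <-> le z a /\ le z b.
Proof.
  unfold meet, inf. split; intro H.
  - split; (eapply le_trans; [exact H|]); apply sup_least; intros x Hx; apply Hx; auto.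
  - apply sup_ub. intros y [-> | ->]; apply H.
Qed.

Lemma join_spec (L : mlattice) (a b z : L) : le (join L a b) z <-> le a z /\ le b z.
Proof.
  unfold join. split; intro H.
  - split; (eapply le_trans; [|exact H]); apply sup_ub; auto.
  - apply sup_least. intros y [-> | ->]; apply H.
Qed.

Lemma inf_list_spec (L : mlattice) (l : list L) z : le z (inf_list L l) <-> forall y, In y l -> le z y.
Proof.
  unfold inf_list, inf. split; intro H.
  - intros y Hy. eapply le_trans; [exact H|]. apply sup_least. intros x Hx; apply Hx; auto.
  - apply sup_ub. exact H.
Qed.

Lemma pow_mono (L : mlattice) (x y : L) n : le x y -> le (pow L x n) (pow L y n).
Proof.
  intro H. induction n; simpl. apply le_refl. apply mul_mono; assumption.
Qed.

Lemma pow_mul (L : mlattice) (x y : L) n : pow L (mul x y) n = mul (pow L x n) (pow L y n).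
Proof.
  induction n; simpl.
  - rewrite mul_one. reflexivity.
  - rewrite IHn. rewrite !mul_assoc. f_equal.
    rewrite <- !mul_assoc. f_equal. apply mul_comm.
Qed.

Lemma pow_le (L : mlattice) (x : L) n : le (pow L x (S n)) x.
Proof. simpl. apply mul_le_r. Qed.

Definition Rad (L : mlattice) (c : L) := forall w n, le (pow L w (S n)) c -> le w c.
Definition Sat (L : mlattice) (S : L -> Prop) (c : L) :=
  forall s w, S s -> le (mul s w) c -> le w c.
Definition Disj (L : mlattice) (S : L -> Prop) (c : L) := forall t, S t -> ~ le t c.
Definition Good (L : mlattice) (S : L -> Prop) (c : L) :=
  exists ps : list L, (forall p, In p ps -> S_prime L S p) /\ c = inf_list L ps.

Lemma rad_sq (L : mlattice) (c w : L) : Rad L c -> le (mul w w) c -> le w c.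
Proof.
  intros HR H. apply (HR w 1). simpl. rewrite (mul_comm L w one), mul_one. exact H.
Qed.

Lemma sat_colon (L : mlattice) S c z : Sat L S c -> Sat L S (colon L c z).
Proof.
  intros H s w Hs Hw. apply colon_r. apply colon_l in Hw.
  apply (H s); auto. rewrite mul_assoc. exact Hw.
Qed.

Lemma rad_colon (L : mlattice) c z : Rad L c -> Rad L (colon L c z).
Proof.
  intros H w n Hw. apply colon_r. apply colon_l in Hw.
  apply (H _ n). rewrite pow_mul. eapply le_trans; [|exact Hw].
  apply mul_mono_r. apply pow_le.
Qed.

Lemma inf_list_app (L : mlattice) (l1 l2 : list L) :
  inf_list L (l1 ++ l2) = meet L (inf_list L l1) (inf_list L l2).
Proof.
  apply le_antisym.
  - apply meet_spec; split; apply inf_list_spec; intros y Hy;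
      apply (proj1 (inf_list_spec L _ _) (le_refl _ _)); apply in_or_app; auto.
  - apply inf_list_spec. intros y Hy. apply in_app_or in Hy.
    pose proof (proj1 (meet_spec L _ _ _) (le_refl _ (meet L (inf_list L l1) (inf_list L l2)))) as [A B].
    destruct Hy as [Hy|Hy].
    + eapply le_trans; [exact A|]. apply (proj1 (inf_list_spec L _ _) (le_refl _ _)); auto.
    + eapply le_trans; [exact B|]. apply (proj1 (inf_list_spec L _ _) (le_refl _ _)); auto.
Qed.

Lemma key (L : mlattice) S (H1 : S one) c :
  Sat L S c -> Rad L c -> Disj L S c -> ~ Good L S c ->
  exists d, Sat L S d /\ Rad L d /\ Disj L S d /\ ~ Good L S d /\ le c d /\ d <> c.
Proof.
  intros Hs Hr Hd Hg.
  assert (Hp : ~ (forall x y, le (mul x y) c -> le x c \/ le y c)).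
  { intro Hp. apply Hg. exists (c :: nil). split.
    - intros p [<- | []]. split; [|split].
      + intro E. apply (Hd one H1). rewrite E. apply le_refl.
      + exact Hd.
      + exists one. split; [exact H1|]. intros x y Hxy. rewrite !mul_one. auto.
    - apply le_antisym.
      + apply inf_list_spec. intros y [<- | []]. apply le_refl.
      + apply (proj1 (inf_list_spec L _ _) (le_refl _ _)). left; reflexivity. }
  apply not_all_ex_not in Hp. destruct Hp as [x Hp].
  apply not_all_ex_not in Hp. destruct Hp as [y Hp].
  apply imply_to_and in Hp. destruct Hp as [Hxy Hp].
  apply not_or_and in Hp. destruct Hp as [Hx Hy].
  set (d := colon L c x). set (e := colon L c d).
  assert (Hyd : le y d). { apply colon_r. rewrite mul_comm. exact Hxy. }
  assert (Hxe : le x e). { apply colon_r. rewrite mul_comm. apply colon_l. apply le_refl. }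
  assert (Hcd : le c d). { apply colon_r. apply mul_le_r. }
  assert (Hce : le c e). { apply colon_r. apply mul_le_r. }
  assert (Hsd : Sat L S d) by (apply sat_colon; auto).
  assert (Hse : Sat L S e) by (apply sat_colon; auto).
  assert (Hrd : Rad L d) by (apply rad_colon; auto).
  assert (Hre : Rad L e) by (apply rad_colon; auto).
  assert (Hdd : Disj L S d).
  { intros t Ht H. apply colon_l in H. apply Hx. apply (Hs t); auto. }
  assert (Hde : Disj L S e).
  { intros t Ht H. apply colon_l in H. apply Hy. eapply le_trans; [exact Hyd|]. apply (Hs t); auto. }
  assert (Hm : c = meet L d e).
  { apply le_antisym. apply meet_spec; auto.
    apply rad_sq; auto. set (w := meet L d e).
    pose proof (proj1 (meet_spec L _ _ _) (le_refl _ w)) as [A B].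
    apply le_trans with (mul w d). apply mul_mono_r; exact A.
    apply colon_l. exact B. }
  destruct (classic (Good L S d)) as [Gd | Gd].
  - destruct (classic (Good L S e)) as [Ge | Ge].
    + exfalso. apply Hg. destruct Gd as [l1 [P1 E1]]. destruct Ge as [l2 [P2 E2]].
      exists (l1 ++ l2). split.
      * intros p Hp. apply in_app_or in Hp. destruct Hp; auto.
      * rewrite inf_list_app, <- E1, <- E2. exact Hm.
    + exists e. repeat split; auto. intro E. apply Hx. rewrite <- E. exact Hxe.
  - exists d. repeat split; auto. intro E. apply Hy. rewrite <- E. exact Hyd.
Qed.

Lemma asb_iff (P : Prop) : is_true (boolp.asbool P) <-> P.
Proof.
  split; intro H; [exact (ssrbool.elimT (boolp.asboolP P) H) | exact (ssrbool.introT (boolp.asboolP P) H)].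
Qed.

Lemma asb_l (P : Prop) : is_true (boolp.asbool P) -> P.
Proof. apply asb_iff. Qed.
Lemma asb_r (P : Prop) : P -> is_true (boolp.asbool P).
Proof. apply asb_iff. Qed.

Lemma sat_good (L : mlattice) S (HN : S_noetherian L S) (H1 : S one) c :
  Sat L S c -> Rad L c -> Disj L S c -> Good L S c.
Proof.
  intros Hs Hr Hd. apply NNPP. intro Hg.
  set (F := fun c => Sat L S c /\ Rad L c /\ Disj L S c /\ ~ Good L S c).
  set (T := {x : L | F x}).
  set (R := fun (x y : T) => boolp.asbool (le (proj1_sig x) (proj1_sig y))).
  assert (t0 : T) by (exists c; unfold F; auto).
  destruct (@classical_sets.ZL_preorder T t0 R) as [t Ht].
  - intro x. unfold R. apply asb_r. apply le_refl.
  - intros x y z A B. unfold R in *. apply asb_r. apply asb_l in A. apply asb_l in B. eapply le_trans; [exact A| exact B].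
  - intros A HA. unfold R in *. destruct (classic (exists x, A x)) as [[x0 Hx0] | NA].
    2:{ exists t0. intros s Hs'. exfalso. apply NA. exists s. exact Hs'. }
    set (J := sup (fun z => exists x, A x /\ z = proj1_sig x)).
    destruct (proj2 HN J) as [s [b [HsS [Hb [HsJ HbJ]]]]].
    destruct (Hb _ HbJ) as [l [Hl Hbl]].
    assert (Hub : exists x, A x /\ forall y, In y l -> le y (proj1_sig x)).
    { clear Hbl. induction l as [|y l IH].
      - exists x0. split; auto. intros y [].
      - destruct IH as [x [Ax Hx]]. { intros z Hz. apply Hl. right; exact Hz. }
        destruct (Hl y (or_introl eq_refl)) as [x' [Ax' ->]].
        destruct (HA x x' Ax Ax') as [Rxx | Rxx]; apply asb_l in Rxx.
        + exists x'. split; auto. intros z [<- | Hz]. apply le_refl. eapply le_trans; eauto.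
        + exists x. split; auto. intros z [<- | Hz]; auto. }
    destruct Hub as [x [Ax Hx]].
    assert (HJ : le J (proj1_sig x)).
    { destruct (proj2_sig x) as [Sx _]. apply (Sx s); auto.
      eapply le_trans; [exact HsJ|]. eapply le_trans; [exact Hbl|].
      apply sup_least. exact Hx. }
    exists x. intros s' As'. apply asb_r. eapply le_trans; [|exact HJ].
    apply sup_ub. exists s'. auto.
  - destruct t as [tv [Ts [Tr [Td Tg]]]].
    destruct (key L S H1 tv Ts Tr Td Tg) as [d [Ds [Dr [Dd [Dg [Htd Hne]]]]]].
    assert (Fd : F d) by (unfold F; auto).
    specialize (Ht (exist _ d Fd)). unfold R in Ht. simpl in Ht.
    apply Hne. apply le_antisym; auto. apply asb_l. apply Ht. apply asb_r. exact Htd.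
Qed.

Theorem mainTheorem11 (L : mlattice) (S : L -> Prop)
  (HS : mult_closed L S) (HN : S_noetherian L S)
  (H1 : S one) (H0 : ~ S (bot L)) :
  forall a : L, a = rad L a -> (forall t, S t -> ~ le t a) ->
  exists ps : list L, (forall p, In p ps -> S_prime L S p) /\ a = inf_list L ps.
Proof.
  intros a Ha Hd.
  destruct HS as [_ [_ Hmul]].
  pose proof HN as [[Hmod [_ [Hcg _]]] HSc].
  assert (Hr : Rad L a).
  { intros w n Hw. rewrite (Hcg w). apply sup_least. intros x [Cx Hxw].
    apply le_trans with (rad L a); [| rewrite <- Ha; apply le_refl].
    apply sup_ub. split; [exact Cx|]. exists (Datatypes.S n). split; [apply le_n_S, le_0_n|].
    eapply le_trans; [apply pow_mono; exact Hxw | exact Hw]. }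
  set (K := sup (fun z => exists s, S s /\ z = colon L a s)).
  destruct (HSc K) as [t [b [Ht [Hb [HtK HbK]]]]].
  destruct (Hb _ HbK) as [l [Hl Hbl]].
  assert (Hu : exists u, S u /\ forall y, In y l -> le y (colon L a u)).
  { clear Hbl. induction l as [|y l IH].
    - exists one. split; auto. intros y [].
    - destruct IH as [u [Su Hu]]. { intros z Hz. apply Hl. right; exact Hz. }
      destruct (Hl y (or_introl eq_refl)) as [s [Ss ->]].
      exists (mul s u). split; [apply Hmul; auto|].
      intros z [<- | Hz].
      + apply colon_r. rewrite mul_assoc. eapply le_trans; [apply mul_le_r|].
        apply colon_l, le_refl.
      + apply colon_r. rewrite (mul_comm L s u), mul_assoc. eapply le_trans; [apply mul_le_r|].
        apply colon_l. auto. }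
  destruct Hu as [u [Su Hu]].
  set (v := mul t u).
  assert (Sv : S v) by (apply Hmul; auto).
  set (c := colon L a v).
  assert (HKc : le K c).
  { apply colon_r. unfold v. rewrite mul_assoc, (mul_comm L K t).
    apply colon_l. eapply le_trans; [exact HtK|]. eapply le_trans; [exact Hbl|].
    apply sup_least. exact Hu. }
  assert (Hsc : Sat L S c).
  { intros s w Ss Hw. apply colon_l in Hw. eapply le_trans; [|exact HKc].
    apply le_trans with (colon L a (mul s v)).
    - apply colon_r. rewrite mul_assoc, (mul_comm L w s). exact Hw.
    - apply sup_ub. exists (mul s v). split; auto. }
  assert (Hrc : Rad L c) by (apply rad_colon; auto).
  assert (Hdc : Disj L S c).
  { intros t' St' H. apply colon_l in H. apply (Hd (mul t' v)); auto. }
  assert (Hac : le a c) by (apply colon_spec; apply mul_le_r).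
  destruct (sat_good L S HN H1 c Hsc Hrc Hdc) as [ps [Hps Hc]].
  destruct ps as [|p0 ps0] eqn:Eps.
  { exfalso. apply (Hd v Sv). rewrite <- (mul_one L v). apply colon_l. fold c.
    rewrite Hc. apply inf_list_spec. intros y []. }
  rewrite <- Eps in *.
  assert (Hcp : forall p, In p ps -> le c p).
  { intros p Hp. rewrite Hc. apply (proj1 (inf_list_spec L _ _) (le_refl _ _)). exact Hp. }
  exists (map (fun p => meet L p (join L a v)) ps). split.
  - intros q Hq. apply in_map_iff in Hq. destruct Hq as [p [<- Hp]].
    destruct (Hps p Hp) as [_ [Dp [sp [Sp Hsp]]]].
    assert (Hqp : le (meet L p (join L a v)) p) by (apply (meet_spec L p (join L a v)), le_refl).
    assert (Dq : forall t, S t -> ~ le t (meet L p (join L a v))).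
    { intros t' St' H. apply (Dp t' St'). eapply le_trans; eauto. }
    split; [|split; [exact Dq|]].
    + intro E. apply (Dq one H1). rewrite E. apply le_refl.
    + exists (mul v sp). split; [apply Hmul; auto|].
      assert (Hv : forall z, le (mul (mul v sp) z) (join L a v)).
      { intro z. eapply le_trans; [apply mul_le_r|]. eapply le_trans; [apply mul_le_r|].
        apply (join_spec L a v), le_refl. }
      intros x y Hxy.
      assert (Hxy' : le (mul x y) p) by (eapply le_trans; eauto).
      destruct (Hsp x y Hxy') as [Hx | Hx]; [left|right]; apply meet_spec; (split; [|apply Hv]);
        rewrite <- mul_assoc; exact (le_trans _ _ _ _ (mul_le_l _ _ _) Hx).
  - apply le_antisym.
    + apply inf_list_spec. intros q Hq. apply in_map_iff in Hq. destruct Hq as [p [<- Hp]].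
      apply meet_spec. split.
      * eapply le_trans; [exact Hac| apply Hcp; exact Hp].
      * apply (join_spec L a v), le_refl.
    + set (z := inf_list L (map (fun p => meet L p (join L a v)) ps)).
      assert (Hzq : forall p, In p ps -> le z (meet L p (join L a v))).
      { intros p Hp. apply (proj1 (inf_list_spec L _ _) (le_refl _ z)).
        apply in_map_iff. exists p. auto. }
      assert (Hzc : le z c).
      { rewrite Hc. apply inf_list_spec. intros p Hp.
        eapply le_trans; [apply Hzq; exact Hp|]. apply (meet_spec L p (join L a v)), le_refl. }
      assert (Hzj : le z (join L a v)).
      { eapply le_trans; [apply (Hzq p0); rewrite Eps; left; reflexivity|].
        apply (meet_spec L p0 (join L a v)), le_refl. }
      assert (Hm : le z (meet L (join L a v) c)) by (apply meet_spec; auto).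
      rewrite <- (Hmod a v c Hac) in Hm.
      eapply le_trans; [exact Hm|]. apply join_spec. split; [apply le_refl|].
      apply rad_sq; auto. set (w := meet L v c).
      pose proof (proj1 (meet_spec L _ _ _) (le_refl _ w)) as [A B].
      apply le_trans with (mul w v). apply mul_mono_r; exact A.
      apply colon_l. exact B.
Qed.
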